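(* For every $\lambda\ge 0$, consider the signed variant of xOrder, in which $\widehat G$ is replaced by $\widehat G^{s}(q)=\frac{k_{a,b}}{k}A(q)+\frac{k_{b,a}}{k}B(q)-\lambda\,(A(q)-B(q))$ and the dynamic programming is otherwise unchanged. Its output $O(n^a,n^b)$ is a global maximizer, over all cross-group orderings $o$ of $(\mathrm{p}^a,\mathrm{p}^b)$, of $$J^{s}(o)=\mathrm{AUC}^o-\lambda\big(\mathrm{xAUC}^o(a,b)-\mathrm{xAUC}^o(b,a)\big).$$
   Context: Setting: two disjoint finite groups $a,b$ of instances with labels $Y_u\in\{0,1\}$; $n^g,n^g_1,n^g_0$ denote size, positives and negatives of group $g$ (all $\ge1$); $n_1=n_1^a+n_1^b$, $n_0=n_0^a+n_0^b$, $k_{a,b}=n_1^an_0^b$, $k_{b,a}=n_0^an_1^b$, $k=n_0n_1$. $\mathrm{p}^a=(\mathrm{p}^{a(1)},\dots,\mathrm{p}^{a(n^a)})$, $\mathrm{p}^b=(\mathrm{p}^{b(1)},\dots,\mathrm{p}^{b(n^b)})$ are fixed orderings of the groups. A cross-group ordering is a list of all instances of $a\cup b$ preserving the relative orders within $\mathrm{p}^a$ and within $\mathrm{p}^b$; ''precedes'' means ranked higher. $\mathrm{AUC}^o=\frac{1}{n_1n_0}\#\{(u,v):Y_u=1,Y_v=0,u\text{ precedes }v\text{ in }o\}$; $\mathrm{xAUC}^o(a,b)=\frac{1}{n_1^an_0^b}\#\{(u,v):u\in a,Y_u=1,v\in b,Y_v=0,u\text{ precedes }v\}$, $\mathrm{xAUC}^o(b,a)$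 symmetrically. For $0\le i\le n^a$, $0\le j\le n^b$ and a list $q$ interleaving $\mathrm{p}^{a(1)},\dots,\mathrm{p}^{a(i)}$ and $\mathrm{p}^{b(1)},\dots,\mathrm{p}^{b(j)}$ with within-group orders preserved, let $q^{\to b}$ be $q$ followed by $\mathrm{p}^{b(j+1)},\dots,\mathrm{p}^{b(n^b)}$ and $q^{\to a}$ be $q$ followed by $\mathrm{p}^{a(i+1)},\dots,\mathrm{p}^{a(n^a)}$; $A(q)=\frac{1}{n_1^an_0^b}\#\{(u,v): u\in\{\mathrm{p}^{a(1)},..,\mathrm{p}^{a(i)}\},Y_u=1,v\in b,Y_v=0,u\text{ precedes }v\text{ in }q^{\to b}\}$, $B(q)=\frac{1}{n_1^bn_0^a}\#\{(u,v): u\in\{\mathrm{p}^{b(1)},..,\mathrm{p}^{b(j)}\},Y_u=1,v\in a,Y_v=0,u\text{ precedes }v\text{ in }q^{\to a}\}$. Dynamic programming: $O(i,0)=(\mathrm{p}^{a(1)},\dots,\mathrm{p}^{a(i)})$, $O(0,j)=(\mathrm{p}^{b(1)},\dots,\mathrm{p}^{b(j)})$; for $i=1,\dots,n^a$, $j=1,\dots,n^b$ in increasing order, $O(i,j)=O(i-1,j)\oplus\mathrm{p}^{a(i)}$ if $\widehat G^s(O(i-1,j)\oplus\mathrm{p}^{a(i)})>\widehat G^s(O(i,j-1)\oplus\mathrm{p}^{b(j)})$, and $O(i,j)=O(i,j-1)\oplus\mathrm{p}^{b(j)}$ otherwise ($\oplus$ appends an element to the end of a list). *)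

(* Defs.v *)
From mathcomp Require Import all_boot all_order all_algebra.
Set Implicit Arguments. Unset Strict Implicit. Unset Printing Implicit Defensive.
Import Order.TTheory GRing.Theory Num.Theory.
Local Open Scope ring_scope.

(* An instance is (g, k): g = true means group a, g = false means group b;
   k is its 0-based position in the fixed ordering p^a (resp. p^b),
   i.e. (true, k) is p^{a(k+1)}. Labels: ya (resp. yb) lists the labels of
   p^a (resp. p^b) in order. *)
Definition inst := (bool * nat)%type.

Section XOrder.
Variable R : realFieldType.
Variables ya yb : seq bool.

Definition na := size ya.
Definition nb := size yb.
Definition n1a := count id ya.
Definition n0a := count negb ya.
Definition n1b := count id yb.
Definition n0b := count negb yb.
Definition n1 := (n1a + n1b)%N.
Definition n0 := (n0a + n0b)%N.
Definition kab := (n1a * n0b)%N.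
Definition kba := (n0a * n1b)%N.
Definition kk := (n0 * n1)%N.

Definition label (u : inst) : bool :=
  if u.1 then nth false ya u.2 else nth false yb u.2.

Definition pa (k : nat) : inst := (true, k).
Definition pb (k : nat) : inst := (false, k).

Definition instA : seq inst := map pa (iota 0 na).
Definition instB : seq inst := map pb (iota 0 nb).
Definition instAll : seq inst := instA ++ instB.

(* u precedes (is ranked higher than) v in the list o *)
Definition precedes (o : seq inst) (u v : inst) : bool := (index u o < index v o)%N.

Definition cross_ordering (o : seq inst) : Prop :=
  [seq x <- o | x.1] = instA /\ [seq x <- o | ~~ x.1] = instB.

Definition npairs (us vs : seq inst) (o : seq inst) : nat :=
  \sum_(u <- us) \sum_(v <- vs) (label u && ~~ label v && precedes o u v).

Definition AUC (o : seq inst) : R := (npairs instAll instAll o)%:R / (n1 * n0)%:R.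
Definition xAUCab (o : seq inst) : R := (npairs instA instB o)%:R / (n1a * n0b)%:R.
Definition xAUCba (o : seq inst) : R := (npairs instB instA o)%:R / (n1b * n0a)%:R.

Definition Js (lam : R) (o : seq inst) : R := AUC o - lam * (xAUCab o - xAUCba o).

(* q interleaves p^{a(1..i)} and p^{b(1..j)} *)
Definition q_to_b (j : nat) (q : seq inst) : seq inst := q ++ map pb (iota j (nb - j)).
Definition q_to_a (i : nat) (q : seq inst) : seq inst := q ++ map pa (iota i (na - i)).

Definition Aq (i j : nat) (q : seq inst) : R :=
  (npairs (map pa (iota 0 i)) instB (q_to_b j q))%:R / (n1a * n0b)%:R.
Definition Bq (i j : nat) (q : seq inst) : R :=
  (npairs (map pb (iota 0 j)) instA (q_to_a i q))%:R / (n1b * n0a)%:R.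

Definition Gs (lam : R) (i j : nat) (q : seq inst) : R :=
  (kab%:R / kk%:R) * Aq i j q + (kba%:R / kk%:R) * Bq i j q - lam * (Aq i j q - Bq i j q).

Fixpoint xOrder (lam : R) (i : nat) : nat -> seq inst :=
  match i with
  | 0 => fun j => map pb (iota 0 j)
  | i'.+1 =>
      fix Oj (j : nat) : seq inst :=
        match j with
        | 0 => map pa (iota 0 i'.+1)
        | j'.+1 =>
            let c1 := rcons (xOrder lam i' j'.+1) (pa i') in
            let c2 := rcons (Oj j') (pb j') in
            if Gs lam i'.+1 j'.+1 c2 < Gs lam i'.+1 j'.+1 c1 then c1 else c2
        end
  end.

End XOrder.

(* Main.v *)
Require Import Defs.
From mathcomp Require Import all_boot all_order all_algebra ring lra.
Set Implicit Arguments. Unset Strict Implicit. Unset Printing Implicit Defensive.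

Definition inter (i j : nat) (q : seq inst) : Prop :=
  [seq x <- q | x.1] = map pa (iota 0 i) /\ [seq x <- q | ~~ x.1] = map pb (iota 0 j).

Lemma map_iotaS (T : Type) (f : nat -> T) i :
  map f (iota 0 i.+1) = rcons (map f (iota 0 i)) (f i).
Proof. by rewrite -addn1 iotaD map_cat cats1. Qed.

Lemma pa_inj : injective pa. Proof. by move=> x y [->]. Qed.
Lemma pb_inj : injective pb. Proof. by move=> x y [->]. Qed.

Lemma prec_ins (s1 s2 : seq inst) x u v : u != x -> v != x ->
  precedes (s1 ++ x :: s2) u v = precedes (s1 ++ s2) u v.
Proof.
move=> ux vx; rewrite /precedes !index_cat /=.
rewrite eq_sym (negbTE ux) eq_sym (negbTE vx).
case: ifP => hu; case: ifP => hv //.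
- by rewrite !ltn_addr // index_mem.
- have h : index v s1 < size s1 by rewrite index_mem.
  by rewrite !ltnNge !(leq_trans (ltnW h) (leq_addr _ _)).
- by rewrite !addnS ltnS ltn_add2l.
Qed.

Lemma prec_new (s1 s2 : seq inst) x y : x \notin s1 -> y != x ->
  precedes (s1 ++ x :: s2) x y = (y \notin s1).
Proof.
move=> xs yx; rewrite /precedes !index_cat (negbTE xs) /= eqxx addn0.
rewrite eq_sym (negbTE yx); case: ifP => hy /=.
- by apply/negbTE; rewrite -leqNgt ltnW // index_mem.
- by rewrite addnS ltnS leq_addr.
Qed.

Lemma mem_inter_b i j q k : inter i j q -> (pb k \in q) = (k < j).
Proof.
case=> _ h.
have -> : (pb k \in q) = (pb k \in [seq x <- q | ~~ x.1]) by rewrite mem_filter.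
by rewrite h (mem_map pb_inj) mem_iota.
Qed.

Lemma mem_inter_a i j q k : inter i j q -> (pa k \in q) = (k < i).
Proof.
case=> h _.
have -> : (pa k \in q) = (pa k \in [seq x <- q | x.1]) by rewrite mem_filter.
by rewrite h (mem_map pa_inj) mem_iota.
Qed.

Lemma index_filter (p : pred inst) (s : seq inst) u v : p u -> p v ->
  (index u s < index v s) = (index u (filter p s) < index v (filter p s)).
Proof.
move=> pu pv; elim: s => [//|w s IH] /=.
case: (eqVneq w u) => [wu|wu].
  subst w; rewrite pu /= eqxx; case: (eqVneq u v) => //.
case: (eqVneq w v) => [wv|wv]; first by subst w; rewrite pv /= eqxx (negbTE wu).
case: ifP => pw /=; last by rewrite ltnS IH.
by rewrite (negbTE wu) (negbTE wv) ltnS IH.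
Qed.

Lemma filter_nil_all (p : pred inst) s : filter p s = [::] -> filter (predC p) s = s.
Proof.
elim: s => [//|w s IH] /=; by case: ifP => // pw /IH ->.
Qed.

Section Steps.
Variables ya yb : seq bool.

Lemma neq_ab k l : pa k != pb l. Proof. by []. Qed.
Lemma neq_ba k l : pb k != pa l. Proof. by []. Qed.

Lemma NA_step_a i j q : inter i j q ->
  npairs ya yb (map pa (iota 0 i.+1)) (instB yb) (q_to_b yb j (rcons q (pa i))) =
  (npairs ya yb (map pa (iota 0 i)) (instB yb) (q_to_b yb j q) +
  \sum_(v <- instB yb) (label ya yb (pa i) && ~~ label ya yb v && (j <= v.2)))%N.
Proof.
move=> H; rewrite /q_to_b cat_rcons map_iotaS /npairs -cats1 big_cat big_seq1 /=.
congr (_ + _)%N.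
- apply: eq_big_seq => u hu; apply: eq_big_seq => v hv; rewrite prec_ins //.
    case/mapP: hu => k; rewrite mem_iota => /andP[_ ki] ->.
    by apply/eqP => -[e]; rewrite e ltnn in ki.
  by case/mapP: hv => k _ ->.
- apply: eq_big_seq => v hv; case/mapP: hv => k _ ->; rewrite prec_new //.
  + by rewrite (mem_inter_b k H) -leqNgt.
  + by rewrite (mem_inter_a i H) ltnn.
Qed.

Lemma NB_step_a i j q : (i < na ya)%N ->
  npairs ya yb (map pb (iota 0 j)) (instA ya) (q_to_a ya i.+1 (rcons q (pa i))) =
  npairs ya yb (map pb (iota 0 j)) (instA ya) (q_to_a ya i q).
Proof.
by move=> hi; rewrite /q_to_a cat_rcons -(subnSK hi).
Qed.

Lemma NB_step_b i j q : inter i j q ->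
  npairs ya yb (map pb (iota 0 j.+1)) (instA ya) (q_to_a ya i (rcons q (pb j))) =
  (npairs ya yb (map pb (iota 0 j)) (instA ya) (q_to_a ya i q) +
  \sum_(v <- instA ya) (label ya yb (pb j) && ~~ label ya yb v && (i <= v.2)))%N.
Proof.
move=> H; rewrite /q_to_a cat_rcons map_iotaS /npairs -cats1 big_cat big_seq1 /=.
congr (_ + _)%N.
- apply: eq_big_seq => u hu; apply: eq_big_seq => v hv; rewrite prec_ins //.
    case/mapP: hu => k; rewrite mem_iota => /andP[_ ki] ->.
    by apply/eqP => -[e]; rewrite e ltnn in ki.
  by case/mapP: hv => k _ ->.
- apply: eq_big_seq => v hv; case/mapP: hv => k _ ->; rewrite prec_new //.
  + by rewrite (mem_inter_a k H) -leqNgt.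
  + by rewrite (mem_inter_b j H) ltnn.
Qed.

Lemma NA_step_b i j q : (j < nb yb)%N ->
  npairs ya yb (map pa (iota 0 i)) (instB yb) (q_to_b yb j.+1 (rcons q (pb j))) =
  npairs ya yb (map pa (iota 0 i)) (instB yb) (q_to_b yb j q).
Proof.
by move=> hj; rewrite /q_to_b cat_rcons -(subnSK hj).
Qed.

End Steps.

Lemma filter_map_pa s : [seq x <- map pa s | x.1] = map pa s.
Proof. by elim: s => //= k s ->. Qed.
Lemma filter_map_pa' s : [seq x <- map pa s | ~~ x.1] = [::].
Proof. by elim: s. Qed.
Lemma filter_map_pb s : [seq x <- map pb s | ~~ x.1] = map pb s.
Proof. by elim: s => //= k s ->. Qed.
Lemma filter_map_pb' s : [seq x <- map pb s | x.1] = [::].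
Proof. by elim: s. Qed.

Lemma inter_i0 i : inter i 0 (map pa (iota 0 i)).
Proof. by rewrite /inter filter_map_pa filter_map_pa'. Qed.
Lemma inter_0j j : inter 0 j (map pb (iota 0 j)).
Proof. by rewrite /inter filter_map_pb filter_map_pb'. Qed.

Lemma inter_i0_uniq i q : inter i 0 q -> q = map pa (iota 0 i).
Proof.
case=> h1 h2; rewrite -h1; elim: q h2 {h1} => //= x q IH.
by case: x => [[] k] /= => [/IH <-|].

Qed.
Lemma inter_0j_uniq j q : inter 0 j q -> q = map pb (iota 0 j).
Proof.
case=> h1 h2; rewrite -h2; elim: q h1 {h2} => //= x q IH.
by case: x => [[] k] /= => [|/IH <-].
Qed.

Lemma inter_add_a i j q : inter i j q -> inter i.+1 j (rcons q (pa i)).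
Proof. by case=> h1 h2; rewrite /inter !filter_rcons h1 h2 map_iotaS. Qed.
Lemma inter_add_b i j q : inter i j q -> inter i j.+1 (rcons q (pb j)).
Proof. by case=> h1 h2; rewrite /inter !filter_rcons h1 h2 map_iotaS. Qed.

Lemma inter_last i j q : inter i.+1 j.+1 q ->
  exists q', (q = rcons q' (pa i) /\ inter i j.+1 q') \/
             (q = rcons q' (pb j) /\ inter i.+1 j q').
Proof.
case/lastP: q => [|q' [[] k]].
  by case=> /(congr1 size); rewrite size_map size_iota.
- rewrite /inter !filter_rcons (map_iotaS pa) /= => -[/rcons_inj [= h1 ->] h2].
  by exists q'; left.
- rewrite /inter !filter_rcons (map_iotaS pb) /= => -[h1 /rcons_inj [= h2 ->]].
  by exists q'; right.
Qed.

Section Within.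
Variables ya yb : seq bool.

Lemma npairs_catl us1 us2 vs o :
  npairs ya yb (us1 ++ us2) vs o = (npairs ya yb us1 vs o + npairs ya yb us2 vs o)%N.
Proof. by rewrite /npairs big_cat. Qed.

Lemma npairs_catr us vs1 vs2 o :
  npairs ya yb us (vs1 ++ vs2) o = (npairs ya yb us vs1 o + npairs ya yb us vs2 o)%N.
Proof. by rewrite /npairs -big_split; apply: eq_bigr => u _; rewrite big_cat. Qed.

Lemma within_A o : cross_ordering ya yb o ->
  npairs ya yb (instA ya) (instA ya) o = npairs ya yb (instA ya) (instA ya) (instA ya).
Proof.
case=> h1 _; apply: eq_big_seq => u hu; apply: eq_big_seq => v hv; congr (_ && _).
case/mapP: hu => k _ ->; case/mapP: hv => l _ ->.
by rewrite /precedes (index_filter (p := fun x => x.1)) // h1.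
Qed.

Lemma within_B o : cross_ordering ya yb o ->
  npairs ya yb (instB yb) (instB yb) o = npairs ya yb (instB yb) (instB yb) (instB yb).
Proof.
case=> _ h2; apply: eq_big_seq => u hu; apply: eq_big_seq => v hv; congr (_ && _).
case/mapP: hu => k _ ->; case/mapP: hv => l _ ->.
by rewrite /precedes (index_filter (p := fun x => ~~ x.1)) // h2.
Qed.
End Within.

Import Order.TTheory GRing.Theory Num.Theory.
Local Open Scope ring_scope.

Section R.
Variable R : realFieldType.
Variables ya yb : seq bool.
Variable lam : R.

Local Notation G := (Gs ya yb lam).

Lemma Gs_step_a i j q q' : (i < na ya)%N -> inter i j q -> inter i j q' ->
  G i.+1 j (rcons q (pa i)) - G i j q = G i.+1 j (rcons q' (pa i)) - G i j q'.
Proof.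
move=> hi H H'; rewrite /Gs /Aq /Bq (NA_step_a _ _ H) (NA_step_a _ _ H').
rewrite !(NB_step_a _ _ _ hi) !natrD; ring.
Qed.

Lemma Gs_step_b i j q q' : (j < nb yb)%N -> inter i j q -> inter i j q' ->
  G i j.+1 (rcons q (pb j)) - G i j q = G i j.+1 (rcons q' (pb j)) - G i j q'.
Proof.
move=> hj H H'; rewrite /Gs /Aq /Bq (NB_step_b _ _ H) (NB_step_b _ _ H').
rewrite !(NA_step_b _ _ _ hj) !natrD; ring.
Qed.


Local Notation X := (xOrder ya yb lam).

Lemma xOrder_opt i j : (i <= na ya)%N -> (j <= nb yb)%N ->
  inter i j (X i j) /\ forall q, inter i j q -> G i j q <= G i j (X i j).
Proof.
elim: i j => [|i IHi] j.
  move=> _ _; have -> : X 0 j = map pb (iota 0 j) by [].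
  by split; [exact: inter_0j | move=> q /inter_0j_uniq ->].
elim: j => [|j IHj] hi hj.
  have -> : X i.+1 0 = map pa (iota 0 i.+1) by [].
  by split; [exact: inter_i0 | move=> q /inter_i0_uniq ->].
have E : X i.+1 j.+1 =
  (if G i.+1 j.+1 (rcons (X i.+1 j) (pb j)) < G i.+1 j.+1 (rcons (X i j.+1) (pa i))
   then rcons (X i j.+1) (pa i) else rcons (X i.+1 j) (pb j)) by [].
have [I1 O1] := IHi j.+1 (ltnW hi) hj.
have [I2 O2] := IHj hi (ltnW hj).
have C1 := inter_add_a I1.
have C2 := inter_add_b I2.
have K : forall q, inter i.+1 j.+1 q ->
   G i.+1 j.+1 q <= G i.+1 j.+1 (rcons (X i j.+1) (pa i)) \/
   G i.+1 j.+1 q <= G i.+1 j.+1 (rcons (X i.+1 j) (pb j)).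
  move=> q /inter_last [q' [[-> Hq]|[-> Hq]]].
    left; have e := Gs_step_a hi Hq I1; have := O1 _ Hq; lra.
  right; have e := Gs_step_b hj Hq I2; have := O2 _ Hq; lra.
rewrite E; case: ifP => hlt.
  split => // q /K [//|h]; exact: le_trans h (ltW hlt).
have hle : G i.+1 j.+1 (rcons (X i j.+1) (pa i)) <= G i.+1 j.+1 (rcons (X i.+1 j) (pb j)).
  by rewrite leNgt hlt.
split => // q /K [h|//]; exact: le_trans h hle.
Qed.


Lemma Js_eq o : (0 < n1a ya)%N -> (0 < n0a ya)%N -> (0 < n1b yb)%N -> (0 < n0b yb)%N ->
  cross_ordering ya yb o ->
  Js ya yb lam o =
  (npairs ya yb (instA ya) (instA ya) (instA ya) + npairs ya yb (instB yb) (instB yb) (instB yb))%:R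
    / (n1 ya yb * n0 ya yb)%:R + G (na ya) (nb yb) o.
Proof.
move=> p1 p2 p3 p4 H.
rewrite /Js /AUC /xAUCab /xAUCba /Gs /Aq /Bq /q_to_b /q_to_a !subnn !cats0.
rewrite -/(instA ya) -/(instB yb) /instAll npairs_catl !npairs_catr.
rewrite (within_A H) (within_B H) /kab /kk /n1 /n0 !natrM !natrD.
have h1 : (n1a ya)%:R != 0 :> R by rewrite pnatr_eq0 -lt0n.
have h2 : (n0a ya)%:R != 0 :> R by rewrite pnatr_eq0 -lt0n.
have h3 : (n1b yb)%:R != 0 :> R by rewrite pnatr_eq0 -lt0n.
have h4 : (n0b yb)%:R != 0 :> R by rewrite pnatr_eq0 -lt0n.
have h5 : (n1a ya)%:R + (n1b yb)%:R != 0 :> R by rewrite -natrD pnatr_eq0 -lt0n addn_gt0 p1.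
have h6 : (n0a ya)%:R + (n0b yb)%:R != 0 :> R by rewrite -natrD pnatr_eq0 -lt0n addn_gt0 p2.
field.
by rewrite h1 h2 h3 h4 h5 h6.
Qed.

End R.

Theorem mainTheorem5 (R : realFieldType) (ya yb : seq bool) (lam : R) :
  (0 < n1a ya)%N -> (0 < n0a ya)%N -> (0 < n1b yb)%N -> (0 < n0b yb)%N ->
  0 <= lam ->
  let O := xOrder ya yb lam (na ya) (nb yb) in
  cross_ordering ya yb O /\
  (forall o, cross_ordering ya yb o -> Js ya yb lam o <= Js ya yb lam O).
Proof.
move=> p1 p2 p3 p4 _ O.
have [I Opt] := xOrder_opt lam (leqnn (na ya)) (leqnn (nb yb)).
split=> // o Ho.
rewrite (Js_eq _ p1 p2 p3 p4 Ho) (Js_eq _ p1 p2 p3 p4 I) lerD2l.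
exact: Opt.
Qed.
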